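(* Let $(X_1,\le_1)$, $(X_2,\le_2)$ be partially ordered sets with directed completions $(\overline X_1,\iota_1)$, $(\overline X_2,\iota_2)$. Then the directed completion of $X_1\times X_2$ with the product order is $\overline X_1\times\overline X_2$ with the product order, together with the map $(x_1,x_2)\mapsto(\iota_1(x_1),\iota_2(x_2))$.
   Context: The product order on $X_1\times X_2$: $(a_1,a_2)\le(b_1,b_2)$ iff $a_1\le_1b_1$ and $a_2\le_2b_2$. A subset $D$ of a partially ordered set is directed if every finite subset of $D$ (including the empty one) has an upper bound in $D$. A partially ordered set is a dcpo if every directed subset has a supremum. A map $T$ between partially ordered sets has the Monotone Convergence Property (Mcp) if for every directed $D$ having a supremum, $T(D)$ has a supremum and $T(\sup D)=\sup T(D)$. A directed completion of $(X,\le)$ is a dcpo $(\overline X,\bar\le)$ together with a map $\iota:X\to\overline X$ with the Mcp such that for every dcpo $Z$ and every map $T:X\to Z$ with the Mcp there is a unique map $\bar T:\overline X\to Z$ with the Mcp satisfying $\bar T\circ\iota=T$. *)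

(* Defs.v *)
From Stdlib Require Import List.
Import ListNotations.
Set Implicit Arguments.

Record Poset := {
  car :> Type;
  le : car -> car -> Prop;
  le_refl : forall x, le x x;
  le_trans : forall x y z, le x y -> le y z -> le x z;
  le_antisym : forall x y, le x y -> le y x -> x = y
}.

Arguments le {p} _ _.

Definition prod_le {X1 X2 : Poset} (a b : X1 * X2) : Prop :=
  le (fst a) (fst b) /\ le (snd a) (snd b).

Lemma prod_le_refl {X1 X2 : Poset} (x : X1 * X2) : prod_le x x.
Proof. split; apply le_refl. Qed.

Lemma prod_le_trans {X1 X2 : Poset} (x y z : X1 * X2) :
  prod_le x y -> prod_le y z -> prod_le x z.
Proof. intros [H1 H2] [H3 H4]; split; eapply le_trans; eauto. Qed.

Lemma prod_le_antisym {X1 X2 : Poset} (x y : X1 * X2) :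
  prod_le x y -> prod_le y x -> x = y.
Proof.
  destruct x, y; intros [H1 H2] [H3 H4]; simpl in *.
  f_equal; apply le_antisym; auto.
Qed.

Definition prodP (X1 X2 : Poset) : Poset :=
  {| car := X1 * X2; le := @prod_le X1 X2;
     le_refl := @prod_le_refl X1 X2;
     le_trans := @prod_le_trans X1 X2;
     le_antisym := @prod_le_antisym X1 X2 |}.

(* D is directed: every finite subset of D (including the empty one)
   has an upper bound in D. Finite subsets are given by lists. *)
Definition directed {X : Poset} (D : X -> Prop) : Prop :=
  forall l : list X, (forall x, In x l -> D x) ->
    exists u, D u /\ forall x, In x l -> le x u.

Definition is_sup {X : Poset} (D : X -> Prop) (s : X) : Prop :=
  (forall x, D x -> le x s) /\
  (forall u, (forall x, D x -> le x u) -> le s u).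

Definition dcpo (X : Poset) : Prop :=
  forall D : X -> Prop, directed D -> exists s, is_sup D s.

Definition image {X Y : Poset} (T : X -> Y) (D : X -> Prop) : Y -> Prop :=
  fun y => exists x, D x /\ T x = y.

(* Monotone Convergence Property: for every directed D having a supremum,
   T(D) has a supremum and T(sup D) = sup T(D). *)
Definition Mcp {X Y : Poset} (T : X -> Y) : Prop :=
  forall D : X -> Prop, directed D -> forall s, is_sup D s ->
    is_sup (image T D) (T s).

Definition directed_completion {X Xb : Poset} (iota : X -> Xb) : Prop :=
  dcpo Xb /\ Mcp iota /\
  forall (Z : Poset), dcpo Z -> forall T : X -> Z, Mcp T ->
    exists Tb : Xb -> Z, (Mcp Tb /\ forall x, Tb (iota x) = T x) /\
      forall Tb' : Xb -> Z, Mcp Tb' -> (forall x, Tb' (iota x) = T x) ->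
        forall y, Tb' y = Tb y.

(* Main.v *)
Require Import Defs.
From Stdlib Require Import List ProofIrrelevance ClassicalEpsilon.
Import ListNotations.

Lemma choice_fun {A B : Type} (R : A -> B -> Prop) :
  (forall a, exists b, R a b) -> exists f : A -> B, forall a, R a (f a).
Proof.
  intros H. exists (fun a => proj1_sig (constructive_indefinite_description _ (H a))).
  intros a. exact (proj2_sig (constructive_indefinite_description _ (H a))).
Qed.

Lemma sup_unique {X : Poset} (D : X -> Prop) s t : is_sup D s -> is_sup D t -> s = t.
Proof. intros [H1 H2] [H3 H4]. apply le_antisym; auto. Qed.

Lemma is_sup_ext {X : Poset} (D D' : X -> Prop) s :
  (forall y, D y <-> D' y) -> is_sup D s -> is_sup D' s.
Proof.
  intros E [H1 H2]; split.
  - intros x Hx; apply H1, E; auto.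
  - intros u Hu; apply H2; intros x Hx; apply Hu, E; auto.
Qed.

Lemma lift_list {A B : Type} (f : A -> B) (Q : A -> Prop) (l : list B) :
  (forall x, In x l -> exists a, Q a /\ f a = x) ->
  exists l', (forall a, In a l' -> Q a) /\ map f l' = l.
Proof.
  induction l as [|x l IH]; intros H.
  - exists nil; split; [intros a []|reflexivity].
  - destruct (H x (or_introl eq_refl)) as [a [Qa Ea]].
    destruct IH as [l' [H1 H2]]. { intros y Hy; apply H; right; auto. }
    exists (a :: l'); split.
    + intros b [<-|Hb]; auto.
    + simpl; congruence.
Qed.

Lemma directed_image {X Y : Poset} (f : X -> Y) (D : X -> Prop) :
  (forall a b, le a b -> le (f a) (f b)) -> directed D -> directed (image f D).
Proof.
  intros Hm HD l Hl.
  destruct (lift_list f D l Hl) as [l' [H1 H2]].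
  destruct (HD l' H1) as [u [Du Hu]].
  exists (f u); split. { exists u; auto. }
  intros x Hx. subst l. apply in_map_iff in Hx as [a [<- Ha]]. apply Hm, Hu, Ha.
Qed.

Lemma Mcp_mono {X Y : Poset} (T : X -> Y) : Mcp T -> forall a b, le a b -> le (T a) (T b).
Proof.
  intros HT a b Hab.
  set (D := fun x : X => x = a \/ x = b).
  assert (HD : directed D).
  { intros l Hl. exists b; split; [right; reflexivity|].
    intros x Hx. destruct (Hl x Hx) as [->| ->]; [exact Hab| apply le_refl]. }
  assert (Hs : is_sup D b).
  { split.
    - intros x [->| ->]; [exact Hab|apply le_refl].
    - intros u Hu; apply Hu; right; reflexivity. }
  destruct (HT D HD b Hs) as [H1 _]. apply H1. exists a; split; [left; reflexivity| reflexivity].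
Qed.

Lemma directed_nonempty {X : Poset} (D : X -> Prop) : directed D -> exists x, D x.
Proof. intros HD. destruct (HD nil) as [u [Du _]]. { intros x []. } eauto. Qed.

Definition sub_le (X : Poset) (P : X -> Prop) (a b : {y : X | P y}) : Prop :=
  le (proj1_sig a) (proj1_sig b).

Lemma sub_antisym (X : Poset) (P : X -> Prop) a b :
  sub_le X P a b -> sub_le X P b a -> a = b.
Proof.
  destruct a as [a pa], b as [b pb]; unfold sub_le; simpl; intros H1 H2.
  assert (a = b) by (apply le_antisym; auto). subst. f_equal. apply proof_irrelevance.
Qed.

Definition subP (X : Poset) (P : X -> Prop) : Poset :=
  {| car := {y : X | P y}; le := sub_le X P;
     le_refl := fun a => @le_refl X (proj1_sig a);
     le_trans := fun a b c => @le_trans X (proj1_sig a) (proj1_sig b) (proj1_sig c);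
     le_antisym := sub_antisym X P |}.

Lemma sup_in_sub (X : Poset) (P : X -> Prop) (D' : subP X P -> Prop) t (Pt : P t) :
  is_sup (image (X := subP X P) (Y := X) (@proj1_sig _ P) D') t ->
  is_sup D' (exist _ t Pt : subP X P).
Proof.
  intros [H1 H2]; split.
  - intros x Dx. apply H1. exists x; auto.
  - intros u Hu. apply H2. intros y [x [Dx <-]]. apply Hu, Dx.
Qed.

Lemma dc_ind {X Xb : Poset} (iota : X -> Xb) : directed_completion iota ->
  forall P : Xb -> Prop, (forall x, P (iota x)) ->
  (forall D, directed D -> (forall d, D d -> P d) -> forall s, is_sup D s -> P s) ->
  forall y, P y.
Proof.
  intros [Hdc [Hmi Hu]] P Hi Hcl.
  pose (S := subP Xb P).
  pose (pr := fun z : S => proj1_sig z).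
  assert (Hprd : forall D' : S -> Prop, directed D' -> directed (image (X:=S) (Y:=Xb) pr D')).
  { intros D' HD'. apply directed_image; auto. }
  assert (HprP : forall D' : S -> Prop, forall d, image (X:=S) (Y:=Xb) pr D' d -> P d).
  { intros D' d [z [_ <-]]. exact (proj2_sig z). }
  assert (HdS : dcpo S).
  { intros D' HD'. destruct (Hdc _ (Hprd D' HD')) as [t Ht].
    pose proof (Hcl _ (Hprd D' HD') (HprP D') t Ht) as Pt.
    exists (exist _ t Pt). apply sup_in_sub; exact Ht. }
  pose (i' := fun x : X => (exist _ (iota x) (Hi x) : S)).
  assert (Hi' : Mcp i').
  { intros D HD s Hs.
    pose proof (Hmi D HD s Hs) as H.
    apply (sup_in_sub Xb P).
    eapply is_sup_ext; [|exact H].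
    intros y; split.
    - intros [x [Dx <-]]. exists (i' x); split; [exists x; auto|reflexivity].
    - intros [z [[x [Dx <-]] <-]]. exists x; auto. }
  destruct (Hu S HdS i' Hi') as [e [[He Hext] _]].
  destruct (Hu Xb Hdc iota Hmi) as [Tb [_ Huniq]].
  assert (Hid : Mcp (fun y : Xb => y)).
  { intros D HD s Hs. eapply is_sup_ext; [|exact Hs].
    intros y; split; [intros Dy; exists y; auto| intros [x [Dx <-]]; auto]. }
  assert (He' : Mcp (fun y => pr (e y))).
  { intros D HD s Hs.
    pose proof (He D HD s Hs) as H.
    assert (HdI : directed (image e D)) by (apply directed_image; [apply Mcp_mono; auto|auto]).
    destruct (Hdc _ (Hprd _ HdI)) as [t Ht].
    pose proof (Hcl _ (Hprd _ HdI) (HprP _) t Ht) as Pt.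
    pose proof (sup_in_sub Xb P _ t Pt Ht) as H'.
    pose proof (sup_unique _ _ _ H H') as E.
    replace (pr (e s)) with t by (rewrite E; reflexivity).
    eapply is_sup_ext; [|exact Ht].
    intros y; split.
    - intros [z [[x [Dx <-]] <-]]. exists x; auto.
    - intros [x [Dx <-]]. exists (e x); split; [exists x; auto|reflexivity]. }
  intros y.
  pose proof (Huniq _ Hid (fun x => eq_refl) y) as E1.
  assert (E2 : pr (e y) = Tb y).
  { apply (Huniq _ He'). intros x. unfold pr. rewrite Hext. reflexivity. }
  rewrite E1, <- E2. exact (proj2_sig (e y)).
Qed.

Lemma dc_uniq {X Xb Z : Poset} (iota : X -> Xb) : directed_completion iota ->
  forall f g : Xb -> Z, Mcp f -> Mcp g -> (forall x, f (iota x) = g (iota x)) ->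
  forall y, f y = g y.
Proof.
  intros C f g Hf Hg Hfg. apply (dc_ind iota C); [exact Hfg|].
  intros D HD HDP s Hs.
  apply (sup_unique (image f D)); [apply (Hf D HD s Hs)|].
  eapply is_sup_ext; [|exact (Hg D HD s Hs)].
  intros y; split; intros [x [Dx <-]]; exists x; split; auto.
  symmetry; apply HDP; auto.
Qed.

Lemma proj_sup1 {Y1 Y2 : Poset} (D : prodP Y1 Y2 -> Prop) s :
  is_sup D s -> is_sup (image (X:=prodP Y1 Y2) (Y:=Y1) fst D) (fst s).
Proof.
  intros [H1 H2]; split.
  - intros x [d [Dd <-]]. apply (H1 d Dd).
  - intros u Hu. assert (H : prod_le s (u, snd s)).
    { apply (H2 (u, snd s)). intros x Dx. split; simpl.
      + apply Hu. exists x; auto.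
      + apply (H1 x Dx). }
    apply H.
Qed.

Lemma proj_sup2 {Y1 Y2 : Poset} (D : prodP Y1 Y2 -> Prop) s :
  is_sup D s -> is_sup (image (X:=prodP Y1 Y2) (Y:=Y2) snd D) (snd s).
Proof.
  intros [H1 H2]; split.
  - intros x [d [Dd <-]]. apply (H1 d Dd).
  - intros u Hu. assert (H : prod_le s (fst s, u)).
    { apply (H2 (fst s, u)). intros x Dx. split; simpl.
      + apply (H1 x Dx).
      + apply Hu. exists x; auto. }
    apply H.
Qed.

Lemma dir_fst {Y1 Y2 : Poset} (D : prodP Y1 Y2 -> Prop) :
  directed D -> directed (image (X:=prodP Y1 Y2) (Y:=Y1) fst D).
Proof. intros HD; apply directed_image; auto. intros a b [h _]; exact h. Qed.

Lemma dir_snd {Y1 Y2 : Poset} (D : prodP Y1 Y2 -> Prop) :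
  directed D -> directed (image (X:=prodP Y1 Y2) (Y:=Y2) snd D).
Proof. intros HD; apply directed_image; auto. intros a b [_ h]; exact h. Qed.

Lemma sections {Y1 Y2 Z : Poset} (T : prodP Y1 Y2 -> Z) : Mcp T ->
  (forall y2, Mcp (fun y1 : Y1 => T (y1, y2))) /\ (forall y1, Mcp (fun y2 : Y2 => T (y1, y2))).
Proof.
  intros HT; split.
  - intros y2 D HD s Hs.
    pose (D' := image (X:=Y1) (Y:=prodP Y1 Y2) (fun y1 => (y1, y2)) D).
    assert (HD' : directed D').
    { apply directed_image; auto. intros a b h; split; simpl; [exact h|apply le_refl]. }
    assert (Hs' : is_sup D' (s, y2)).
    { destruct Hs as [H1 H2]; split.
      - intros x [d [Dd <-]]. split; simpl; [apply H1; auto|apply le_refl].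
      - intros u Hu. split; simpl.
        + apply H2. intros x Dx. apply (Hu (x, y2)). exists x; auto.
        + destruct (directed_nonempty D HD) as [x Dx]. apply (Hu (x, y2)). exists x; auto. }
    eapply is_sup_ext; [|exact (HT D' HD' _ Hs')].
    intros z; split.
    + intros [p [[x [Dx <-]] <-]]. exists x; auto.
    + intros [x [Dx <-]]. exists (x, y2); split; [exists x; auto|reflexivity].
  - intros y1 D HD s Hs.
    pose (D' := image (X:=Y2) (Y:=prodP Y1 Y2) (fun y2 => (y1, y2)) D).
    assert (HD' : directed D').
    { apply directed_image; auto. intros a b h; split; simpl; [apply le_refl|exact h]. }
    assert (Hs' : is_sup D' (y1, s)).
    { destruct Hs as [H1 H2]; split.
      - intros x [d [Dd <-]]. split; simpl; [apply le_refl|apply H1; auto].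
      - intros u Hu. split; simpl.
        + destruct (directed_nonempty D HD) as [x Dx]. apply (Hu (y1, x)). exists x; auto.
        + apply H2. intros x Dx. apply (Hu (y1, x)). exists x; auto. }
    eapply is_sup_ext; [|exact (HT D' HD' _ Hs')].
    intros z; split.
    + intros [p [[x [Dx <-]] <-]]. exists x; auto.
    + intros [x [Dx <-]]. exists (y1, x); split; [exists x; auto|reflexivity].
Qed.

Lemma joint {Y1 Y2 Z : Poset} (f : Y1 -> Y2 -> Z) :
  (forall y2, Mcp (fun y1 => f y1 y2)) -> (forall y1, Mcp (f y1)) ->
  Mcp (fun p : prodP Y1 Y2 => f (fst p) (snd p)).
Proof.
  intros H1 H2 D HD s Hs.
  pose proof (proj_sup1 D s Hs) as S1. pose proof (proj_sup2 D s Hs) as S2.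
  pose proof (dir_fst D HD) as D1. pose proof (dir_snd D HD) as D2.
  split.
  - intros z [d [Dd <-]].
    apply le_trans with (f (fst s) (snd d)).
    + apply (Mcp_mono (fun y1 => f y1 (snd d)) (H1 _)). apply (proj1 S1). exists d; auto.
    + apply (Mcp_mono _ (H2 _)). apply (proj1 S2). exists d; auto.
  - intros u Hu.
    apply (proj2 (H1 (snd s) _ D1 _ S1)).
    intros z [a [[d [Dd <-]] <-]].
    apply (proj2 (H2 (fst d) _ D2 _ S2)).
    intros w [b [[d' [Dd' <-]] <-]].
    destruct (HD [d; d']) as [d'' [Dd'' Hd'']].
    { intros x [<-|[<-|[]]]; auto. }
    destruct (Hd'' d (or_introl eq_refl)) as [A1 _].
    destruct (Hd'' d' (or_intror (or_introl eq_refl))) as [_ A2].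
    apply le_trans with (f (fst d'') (snd d'')).
    + apply le_trans with (f (fst d'') (snd d')).
      * apply (Mcp_mono (fun y1 => f y1 (snd d')) (H1 _)); exact A1.
      * apply (Mcp_mono _ (H2 _)); exact A2.
    + apply Hu. exists d''; auto.
Qed.

Lemma param {A Ab B Z : Poset} (iota : A -> Ab) : directed_completion iota ->
  forall (F : B -> A -> Z) (Fb : B -> Ab -> Z),
  (forall b, Mcp (Fb b)) -> (forall b a, Fb b (iota a) = F b a) ->
  (forall a, Mcp (fun b => F b a)) ->
  forall y, Mcp (fun b => Fb b y).
Proof.
  intros C F Fb HFb Hext HF.
  assert (Mono : forall b b', le b b' -> forall y, le (Fb b y) (Fb b' y)).
  { intros b b' Hbb'. apply (dc_ind iota C).
    - intros a. rewrite !Hext. apply (Mcp_mono _ (HF a)); exact Hbb'.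
    - intros D HD HDP s Hs.
      apply (proj2 (HFb b D HD s Hs)).
      intros z [d [Dd <-]].
      apply le_trans with (Fb b' d); [apply HDP; auto|].
      apply (Mcp_mono _ (HFb b')). apply (proj1 Hs); auto. }
  intros y D2 HD2 s2 Hs2. revert y.
  apply (dc_ind iota C).
  - intros a. eapply is_sup_ext; [|rewrite Hext; exact (HF a D2 HD2 s2 Hs2)].
    intros z; split; intros [b [Db <-]]; exists b; split; auto.
  - intros D HD HDP s Hs. split.
    + intros z [b [Db <-]]. apply Mono. apply (proj1 Hs2); auto.
    + intros u Hu.
      apply (proj2 (HFb s2 D HD s Hs)).
      intros z [d [Dd <-]].
      apply (proj2 (HDP d Dd)).
      intros w [b [Db <-]].
      apply le_trans with (Fb b s).
      * apply (Mcp_mono _ (HFb b)). apply (proj1 Hs); auto.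
      * apply Hu. exists b; auto.
Qed.

Theorem mainTheorem7 (X1 X2 Xb1 Xb2 : Poset) (iota1 : X1 -> Xb1) (iota2 : X2 -> Xb2) :
  directed_completion iota1 -> directed_completion iota2 ->
  directed_completion (X := prodP X1 X2) (Xb := prodP Xb1 Xb2)
    (fun p : X1 * X2 => (iota1 (fst p), iota2 (snd p))).
Proof.
  intros C1 C2.
  pose proof C1 as [Hd1 [Hm1 Hu1]]. pose proof C2 as [Hd2 [Hm2 Hu2]].
  split; [|split].
  - intros D HD.
    destruct (Hd1 _ (dir_fst D HD)) as [s1 Hs1].
    destruct (Hd2 _ (dir_snd D HD)) as [s2 Hs2].
    exists (s1, s2). split.
    + intros x Dx. split; simpl; [apply (proj1 Hs1)|apply (proj1 Hs2)]; exists x; auto.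
    + intros u Hu. split; simpl; [apply (proj2 Hs1) | apply (proj2 Hs2)];
        intros y [x [Dx <-]]; apply Hu; auto.
  - intros D HD s Hs.
    pose proof (Hm1 _ (dir_fst D HD) _ (proj_sup1 D s Hs)) as S1.
    pose proof (Hm2 _ (dir_snd D HD) _ (proj_sup2 D s Hs)) as S2.
    split.
    + intros y [x [Dx <-]]. split; simpl.
      * apply (proj1 S1). exists (fst x); split; [exists x; auto|reflexivity].
      * apply (proj1 S2). exists (snd x); split; [exists x; auto|reflexivity].
    + intros u Hu. split; simpl.
      * apply (proj2 S1). intros z [a [[x [Dx <-]] <-]].
        exact (proj1 (Hu _ (ex_intro _ x (conj Dx eq_refl)))).
      * apply (proj2 S2). intros z [a [[x [Dx <-]] <-]].
        exact (proj2 (Hu _ (ex_intro _ x (conj Dx eq_refl)))).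
  - intros Z HZ T HT.
    destruct (sections T HT) as [HTs1 HTs2].
    destruct (choice_fun (fun (x2 : X2) (g : Xb1 -> Z) =>
                Mcp g /\ forall x1, g (iota1 x1) = T (x1, x2))) as [F1 HF1].
    { intros x2. destruct (Hu1 Z HZ _ (HTs1 x2)) as [g [G _]]. eauto. }
    assert (HF1y : forall y1, Mcp (fun x2 => F1 x2 y1)).
    { apply (param iota1 C1 (fun x2 x1 => T (x1, x2)) F1).
      - intros b; apply HF1.
      - intros b a; apply HF1.
      - intros a; apply HTs2. }
    destruct (choice_fun (fun (y1 : Xb1) (g : Xb2 -> Z) =>
                Mcp g /\ forall x2, g (iota2 x2) = F1 x2 y1)) as [F2 HF2].
    { intros y1. destruct (Hu2 Z HZ _ (HF1y y1)) as [g [G _]]. eauto. }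
    assert (HF2y : forall y2, Mcp (fun y1 => F2 y1 y2)).
    { apply (param iota2 C2 (fun y1 x2 => F1 x2 y1) F2).
      - intros b; apply HF2.
      - intros b a; apply HF2.
      - intros a; apply HF1. }
    exists (fun p : Xb1 * Xb2 => F2 (fst p) (snd p)). split; [split|].
    + apply joint; [exact HF2y| intros y1; apply HF2].
    + intros [x1 x2]; simpl. rewrite (proj2 (HF2 _)), (proj2 (HF1 _)). reflexivity.
    + intros Tb' HTb' Hext' [y1 y2]. simpl.
      destruct (sections Tb' HTb') as [Hs1 Hs2].
      apply (dc_uniq iota2 C2 (fun y2 => Tb' (y1, y2)) (F2 y1) (Hs2 y1) (proj1 (HF2 y1))).
      intros x2. rewrite (proj2 (HF2 y1)).
      apply (dc_uniq iota1 C1 (fun y1 => Tb' (y1, iota2 x2)) (F1 x2) (Hs1 _) (proj1 (HF1 x2))).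
      intros x1. rewrite (proj2 (HF1 x2)). exact (Hext' (x1, x2)).
Qed.
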